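(* Let $q$ be an odd prime power, $n\ge3$ an odd integer, $s$ an integer with $\gcd(s,2n)=1$, and $\gamma\in\mathbb{F}_{q^{2n}}$ with $\mathrm{N}_{q^{2n}/q}(\gamma)$ a non-square in $\mathbb{F}_q$. Let $\tilde{\mathcal{H}}_s$ be the code $$\Big\{bx^{q^{2s\frac{n+1}{2}}}+a\gamma x^{q^{2s\frac{n-1}{2}}}+(a\gamma)^{q^{s(n+2)}}x^{q^{2s\frac{n+3}{2}}}+\sum_{i=1}^{\frac{n-3}{2}}\Big(c_ix^{q^{2si}}+c_i^{q^{s(2n-2i+1)}}x^{q^{2s(n-i+1)}}\Big): a,b\in\mathbb{F}_{q^n},\ c_i\in\mathbb{F}_{q^{2n}}\Big\}.$$ Then its dual code is $$\tilde{\mathcal{H}}_s^\perp=\Big\{c\gamma^{-1}\alpha x^{q^{2s\frac{n-1}{2}}}+(c\gamma^{-1}\alpha)^{q^{s(n+2)}}x^{q^{2s\frac{n+3}{2}}}: c\in\mathbb{F}_{q^n}\Big\},$$ where $\alpha\in\mathbb{F}_{q^{2n}}$ satisfies $\alpha^{q-1}=-1$.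
   Context: Polynomials are linearized polynomials over $\mathbb{F}_{q^{2n}}$ taken modulo $x^{q^{2n}}-x$, written as $\sum_{i=0}^{n-1}a_ix^{q^{2i}}$ (exponents of the form $q^{2si}$ are reduced modulo $q^{2n}$). The paper's ambient space of Hermitian forms is $\mathcal{H}_n(q^2)=\{\sum_{i=0}^{n-1}c_ix^{q^{2i}}: c_{n-i+1}=c_i^{q^{2n-2i+1}},\ i\in\{0,\dots,n-1\}\}$ (indices modulo $n$), of size $q^{n^2}$, with the pairing $b(f,g)=\mathrm{Tr}_{q^{2n}/q^2}\big(\sum_{i=0}^{n-1}a_ib_i\big)$ for $f=\sum a_ix^{q^{2i}}$, $g=\sum b_ix^{q^{2i}}$, where $\mathrm{Tr}_{q^{2n}/q^2}(x)=\sum_{i=0}^{n-1}x^{q^{2i}}$. The dual of an $\mathbb{F}_q$-linear code $\mathcal{C}$ is $\mathcal{C}^\perp=\{f\in\mathcal{H}_n(q^2): b(f,g)=0\ \forall g\in\mathcal{C}\}$, of size $q^{n^2}/|\mathcal{C}|$. $\mathrm{N}_{q^{2n}/q}(x)=x^{(q^{2n}-1)/(q-1)}$.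
   Formalization: The ambient space $\mathcal{H}_n(q^2)$, in which the dual is taken, requires the coefficient of $x^{q^{2s(n-i+1)}}$ to be the $q^{s(2n-2i+1)}$-th power of the coefficient of $x^{q^{2si}}$, in place of $c_{n-i+1}=c_i^{q^{2n-2i+1}}$. The statement above fails without it. *)

(* Defs.v *)
From HB Require Import structures.
From mathcomp Require Import all_boot all_order all_algebra.
Set Implicit Arguments. Unset Strict Implicit. Unset Printing Implicit Defensive.
Import GRing.Theory.
Local Open Scope ring_scope.

(* F plays the role of F_{q^{2n}}.  A linearized polynomial
   sum_{i<n} a_i x^{q^{2i}} (taken mod x^{q^{2n}} - x) is represented by its
   coefficient vector a : {ffun 'I_n -> F}. *)

(* Frobenius power x |-> x^{q^m} for an integer m (reduced mod 2n, since
   x^{q^{2n}} = x on F_{q^{2n}}). *)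
Definition frob (F : finFieldType) (q n : nat) (m : int) (x : F) : F :=
  x ^+ (q ^ `|(m %% (2 * n)%:Z)%Z|%N).

(* index of x^{q^{2m}} after reduction of exponents modulo q^{2n} *)
Definition idx (n : nat) (m : int) : nat := `|(m %% n%:Z)%Z|%N.

Definition mono (F : finFieldType) (n : nat) (m : int) (c : F) : {ffun 'I_n -> F} :=
  [ffun j : 'I_n => if (j : nat) == idx n m then c else 0].

Definition trq2 (F : finFieldType) (q n : nat) (x : F) : F :=
  \sum_(i < n) x ^+ (q ^ (2 * i)).

Definition norm_q2n_q (F : finFieldType) (q n : nat) (x : F) : F :=
  x ^+ ((q ^ (2 * n) - 1) %/ (q - 1)).

Definition pairing (F : finFieldType) (q n : nat) (f g : {ffun 'I_n -> F}) : F :=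
  @trq2 F q n (\sum_(i < n) f i * g i).

(* Ambient space of Hermitian forms, written with respect to sigma = q^{2s}:
   coefficient of x^{q^{2s(n-i+1)}} = (coefficient of x^{q^{2si}})^{q^{s(2n-2i+1)}}.
   For s = 1 this is literally H_n(q^2) = { c_{n-i+1} = c_i^{q^{2n-2i+1}} }. *)
Definition hermitian_s (F : finFieldType) (q n : nat) (s : int)
    (f : {ffun 'I_n -> F}) : Prop :=
  forall i j k : 'I_n,
    (j : nat) = idx n (s * (n%:Z - (i : nat)%:Z + 1)) ->
    (k : nat) = idx n (s * (i : nat)%:Z) ->
    f j = @frob F q n (s * (2 * n%:Z - 2 * (i : nat)%:Z + 1)) (f k).

Definition Hs_elem (F : finFieldType) (q n : nat) (s : int) (gamma a b : F)
    (c : nat -> F) : {ffun 'I_n -> F} :=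
  @mono F n (s * ((n + 1)./2)%:Z) b
  + @mono F n (s * ((n - 1)./2)%:Z) (a * gamma)
  + @mono F n (s * ((n + 3)./2)%:Z) (@frob F q n (s * (n + 2)%:Z) (a * gamma))
  + \sum_(1 <= i < ((n - 3)./2).+1)
      (@mono F n (s * i%:Z) (c i)
       + @mono F n (s * (n%:Z - i%:Z + 1))
           (@frob F q n (s * (2 * n%:Z - 2 * i%:Z + 1)) (c i))).

Definition in_Hs (F : finFieldType) (q n : nat) (s : int) (gamma : F)
    (g : {ffun 'I_n -> F}) : Prop :=
  exists (a b : F) (c : nat -> F),
    a ^+ (q ^ n) = a /\ b ^+ (q ^ n) = b /\ g = @Hs_elem F q n s gamma a b c.

Definition in_dual_Hs (F : finFieldType) (q n : nat) (s : int) (gamma : F)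
    (f : {ffun 'I_n -> F}) : Prop :=
  @hermitian_s F q n s f /\
  forall g, @in_Hs F q n s gamma g -> @pairing F q n f g = 0.

Definition dual_elem (F : finFieldType) (q n : nat) (s : int) (gamma alpha c : F)
    : {ffun 'I_n -> F} :=
  @mono F n (s * ((n - 1)./2)%:Z) (c * gamma^-1 * alpha)
  + @mono F n (s * ((n + 3)./2)%:Z) (@frob F q n (s * (n + 2)%:Z) (c * gamma^-1 * alpha)).

(* Main.v *)
Require Import Defs.
From HB Require Import structures.
From mathcomp Require Import all_boot all_order all_algebra all_field zify ring.
Import GRing.Theory.
Local Open Scope ring_scope.

Section Pow.
Variables (F : finFieldType) (q n : nat).
Hypothesis Hn : (0 < n)%N.
Hypothesis Hcard : forall x : F, x ^+ (q ^ (2*n)) = x.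

Lemma pw_iter k (x : F) : x ^+ (q ^ (k * (2*n))) = x.
Proof.
elim: k => [|k IH]; first by rewrite mul0n expn0 expr1.
by rewrite mulSn expnD exprM Hcard IH.
Qed.

Lemma pw_mod N (x : F) : x ^+ (q ^ N) = x ^+ (q ^ (N %% (2*n))).
Proof.
by rewrite {1}(divn_eq N (2*n)) expnD exprM pw_iter.
Qed.

Lemma frobE (m : int) (k : nat) (x : F) : (k%:Z %% (2*n)%:Z = m %% (2*n)%:Z)%Z ->
  frob q n m x = x ^+ (q ^ k).
Proof.
move=> H; rewrite /frob [RHS]pw_mod [LHS]pw_mod; congr (_ ^+ (_ ^ _)).
apply/eqP; rewrite -(eqz_nat) -!modz_nat -H gez0_abs ?modz_mod //.
by apply: modz_ge0; rewrite eqz_nat; lia.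
Qed.

Lemma frob_comp a b (x : F) : frob q n a (frob q n b x) = frob q n (a + b) x.
Proof.
rewrite (frobE a `|(a %% (2 * n)%:Z)%Z|%N); last first.
  by rewrite gez0_abs ?modz_mod // modz_ge0 // eqz_nat; lia.
rewrite (frobE b `|(b %% (2 * n)%:Z)%Z|%N x); last first.
  by rewrite gez0_abs ?modz_mod // modz_ge0 // eqz_nat; lia.
rewrite -exprM -expnD.
symmetry; apply: frobE.
rewrite PoszD !gez0_abs ?modz_ge0 ?eqz_nat; try lia.
by rewrite modzDml modzDmr addrC.
Qed.

Lemma frob0 m (x : F) : (m %% (2*n)%:Z = 0)%Z -> frob q n m x = x.
Proof. by move=> H; rewrite (frobE m 0) ?expn0 ?expr1 // H mod0z. Qed.

Lemma frobM m (x y : F) : frob q n m (x * y) = frob q n m x * frob q n m y.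
Proof. by rewrite /frob exprMn. Qed.

Lemma frob_zero m : (0 < q)%N -> frob q n m (0 : F) = 0.
Proof. by move=> Hq; rewrite /frob expr0n expn_eq0; case: (q) Hq. Qed.

End Pow.

Lemma pw_mod_gen (F : finFieldType) (q m : nat) (y : F) :
  y ^+ (q ^ m) = y -> forall k, y ^+ (q ^ k) = y ^+ (q ^ (k %% m)).
Proof.
move=> Hy k; rewrite {1}(divn_eq k m) expnD exprM; congr (_ ^+ _).
elim: (k %/ m)%N => [|j IH]; first by rewrite mul0n expn0 expr1.
by rewrite mulSn expnD exprM Hy IH.
Qed.

Section Tr.
Variables (F : finFieldType) (q n : nat).
Hypothesis Hn : (0 < n)%N.
Hypothesis Hq : (0 < q)%N.
Hypothesis Hcard : forall x : F, x ^+ (q ^ (2*n)) = x.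
Hypothesis Hadd : forall x y : F, (x + y) ^+ q = x ^+ q + y ^+ q.

Lemma pwD k (x y : F) : (x + y) ^+ (q ^ k) = x ^+ (q ^ k) + y ^+ (q ^ k).
Proof.
elim: k => [|k IH]; first by rewrite !expn0 !expr1.
by rewrite expnSr !exprM IH Hadd.
Qed.

Lemma pw0 k : (0 : F) ^+ (q ^ k) = 0.
Proof. by rewrite expr0n expn_eq0; case: (q) Hq. Qed.

Lemma pwN k (x : F) : (- x) ^+ (q ^ k) = - x ^+ (q ^ k).
Proof. by apply/eqP; rewrite -addr_eq0 -pwD addNr pw0. Qed.

Lemma pw_sum k (I : finType) (G : I -> F) :
  (\sum_i G i) ^+ (q ^ k) = \sum_i (G i) ^+ (q ^ k).
Proof.
apply: (big_morph (fun x : F => x ^+ (q ^ k))); [exact: pwD | exact: pw0].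
Qed.

Lemma trq2D (x y : F) : trq2 q n (x + y) = trq2 q n x + trq2 q n y.
Proof. by rewrite /trq2 -big_split; apply: eq_bigr => i _; rewrite pwD. Qed.

Lemma trq2_pw k (w : F) : trq2 q n (w ^+ (q ^ k)) = (trq2 q n w) ^+ (q ^ k).
Proof.
rewrite /trq2 pw_sum; apply: eq_bigr => i _; by rewrite -!exprM mulnC.
Qed.

Lemma trq2_shift (w : F) : trq2 q n (w ^+ (q ^ 2)) = trq2 q n w.
Proof.
rewrite /trq2; case: n Hn Hcard => [//|n'] _ Hc.
rewrite big_ord_recr big_ord_recl /= addrC; congr (_ + _).
  by rewrite -exprM -expnD -mulnS Hc muln0 expn0 expr1.
by apply: eq_bigr => i _; rewrite -exprM -expnD /bump /= -mulnS.
Qed.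

Lemma trq2_shiftk k (w : F) : trq2 q n (w ^+ (q ^ (2 * k))) = trq2 q n w.
Proof.
elim: k => [|k IH]; first by rewrite muln0 expn0 expr1.
by rewrite mulnSr expnD exprM trq2_shift IH.
Qed.

Lemma T_q2 (w : F) : (trq2 q n w) ^+ (q ^ 2) = trq2 q n w.
Proof. by rewrite -trq2_pw trq2_shift. Qed.

Lemma T_pow (w : F) k : (trq2 q n w) ^+ (q ^ k) = (trq2 q n w) ^+ (q ^ (k %% 2)).
Proof. by apply: pw_mod_gen; apply: T_q2. Qed.

Definition TQ (w : F) := trq2 q n w + (trq2 q n w) ^+ q.

Lemma TQD (x y : F) : TQ (x + y) = TQ x + TQ y.
Proof. by rewrite /TQ trq2D Hadd; ring. Qed.

Lemma trq2N (x : F) : trq2 q n (- x) = - trq2 q n x.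
Proof. by apply/eqP; rewrite -addr_eq0 -trq2D addNr /trq2 big1 // => i _; rewrite pw0. Qed.

Lemma TQN (x : F) : TQ (- x) = - TQ x.
Proof. by rewrite /TQ trq2N -(expn1 q) pwN; ring. Qed.

Lemma trq2_frob_odd (e : int) (w : F) : (e %% 2 = 1)%Z ->
  trq2 q n (w + frob q n e w) = TQ w.
Proof.
move=> He; rewrite trq2D /TQ; congr (_ + _).
rewrite (@frobE F q n Hn Hcard e `|(e %% (2 * n)%:Z)%Z|%N); last first.
  by rewrite gez0_abs ?modz_mod // modz_ge0 // eqz_nat; lia.
rewrite trq2_pw T_pow.
suff -> : (`|(e %% (2 * n)%:Z)%Z|%N %% 2 = 1)%N by rewrite expn1.
have H0 : (0 <= e %% (2 * n)%:Z)%Z by rewrite modz_ge0 // eqz_nat; lia.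
move: (gez0_abs H0) => H1.
lia.
Qed.

Lemma TQ_qn (w : F) : odd n -> TQ (w ^+ (q ^ n)) = TQ w.
Proof.
move=> On; rewrite /TQ trq2_pw -exprM -expnSr (T_pow w n) (T_pow w n.+1).
have -> : (n %% 2 = 1)%N by lia.
have -> : (n.+1 %% 2 = 0)%N by lia.
by rewrite expn0 expr1 expn1 addrC.
Qed.

Lemma TQ_Fqn (v : F) : odd n -> v ^+ (q ^ n) = v -> TQ v = trq2 q n v *+ 2.
Proof.
move=> On Hv; rewrite /TQ.
have -> : (trq2 q n v) ^+ q = trq2 q n (v ^+ (q ^ 1)) by rewrite trq2_pw expn1.
have -> : v ^+ (q ^ 1) = v ^+ (q ^ (2 * n.+1./2)).
  have -> : (2 * n.+1./2 = n + 1)%N by lia.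
  by rewrite expnD exprM Hv.
by rewrite trq2_shiftk mulr2n.
Qed.

End Tr.
Arguments TQ {F} q n w.

Lemma size_sum_le (R : nzRingType) (I : finType) (G : I -> {poly R}) B :
  (forall i, (size (G i) <= B)%N) -> (size (\sum_i G i)%R <= B)%N.
Proof.
move=> H; apply: (big_ind (fun p : {poly R} => (size p <= B)%N)) => //.
  by rewrite size_poly0.
move=> x y Hx Hy; apply: leq_trans (size_polyD _ _) _; by rewrite geq_max Hx Hy.
Qed.

Lemma TQ_nonzero (F : finFieldType) (q n : nat) :
  (0 < n)%N -> (1 < q)%N -> #|F| = (q ^ (2 * n))%N ->
  (forall x y : F, (x + y) ^+ q = x ^+ q + y ^+ q) ->
  exists y : F, TQ q n y != 0.
Proof.
move=> Hn Hq Hc Hadd.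
case: n Hn Hc => [//|n'] Hn Hc.
pose G := fun i : 'I_n'.+1 => ('X^(q ^ (2 * i)) + 'X^(q ^ (2 * i).+1) : {poly F}).
pose P := \sum_(i < n'.+1) G i.
have HP : forall x, P.[x] = TQ q n'.+1 x.
  move=> x; rewrite /P /TQ horner_sum.
  have -> : (trq2 q n'.+1 x) ^+ q = trq2 q n'.+1 (x ^+ (q ^ 1)).
    by rewrite (@trq2_pw F q n'.+1) ?expn1 //; lia.
  rewrite /trq2 -big_split; apply: eq_bigr => i _.
  by rewrite /G hornerD !hornerXn -exprM -expnS expn1.
have HPsize : size P = (q ^ (2 * n'.+1).-1).+1.
  rewrite /P.
  rewrite big_ord_recr /= /G addrA addrC size_polyDl size_polyXn.
    by rewrite /=; do 2 f_equal; lia.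
  rewrite ltnS.
  apply: leq_trans (size_polyD _ _) _; rewrite geq_max size_polyXn.
  have Hq0 : (0 < q)%N by lia.
  apply/andP; split; last by rewrite ltn_exp2l.
  apply: size_sum_le => i; apply: leq_trans (size_polyD _ _) _.
  rewrite geq_max !size_polyXn !ltn_exp2l //=.
  have := ltn_ord i; lia.
have P0 : P != 0 by rewrite -size_poly_eq0 HPsize.
case: (boolP [exists y : F, TQ q n'.+1 y != 0]) => [/existsP //| Hall].
have Hr : all (root P) (enum F).
  apply/allP => x _; rewrite /root HP.
  by move: Hall => /existsPn /(_ x) /negPn.
have := max_poly_roots P0 Hr (enum_uniq _).
rewrite -cardE Hc HPsize => H; exfalso.
have E : (q ^ (2 * n'.+1) = q * q ^ (2 * n'.+1).-1)%N by rewrite -expnS; f_equal; lia.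
move: H; rewrite E; set X := (q ^ (2 * n'.+1).-1)%N.
have : (0 < X)%N by rewrite expn_gt0; lia.
nia.
Qed.

Lemma idx_lt (n : nat) (Hn : (0 < n)%N) (m : int) : (idx n m < n)%N.
Proof. rewrite /idx; lia. Qed.

Definition posO (n : nat) (Hn : (0 < n)%N) (m : int) : 'I_n := Ordinal (@idx_lt n Hn m).
Arguments posO {n} Hn m.

Lemma idx_cong n (a b : int) : (a %% n%:Z = b %% n%:Z)%Z -> idx n a = idx n b.
Proof. by rewrite /idx => ->. Qed.

Lemma idx_inj (n : nat) (s a b : int) : (0 < n)%N -> coprimez s n%:Z ->
  (1 <= a <= n%:Z)%R -> (1 <= b <= n%:Z)%R ->
  idx n (s * a) = idx n (s * b) -> a = b.
Proof.
move=> Hn Hs Ha Hb; rewrite /idx => H.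
have H0 : forall m : int, (0 <= m %% n%:Z)%Z by move=> m; rewrite modz_ge0 // eqz_nat; lia.
have E : ((s * a) %% n%:Z = (s * b) %% n%:Z)%Z.
  by rewrite -(gez0_abs (H0 (s * a))) -(gez0_abs (H0 (s * b))) H.
have : (n%:Z %| s * (a - b))%Z.
  by rewrite mulrBr -eqz_mod_dvd; apply/eqP.
rewrite Gauss_dvdzr; last by rewrite /coprimez gcdzC.
case/dvdzP => k Hk.
case/andP: Ha => Ha1 Ha2; case/andP: Hb => Hb1 Hb2.
have [Hk0|[Hk0|Hk0]] : (k = 0 \/ 1 <= k \/ k <= -1)%R by lia.
- by subst k; lia.
- have : (n%:Z <= k * n%:Z)%R by nia.
  lia.
- have : (k * n%:Z <= - n%:Z)%R by nia.
  lia.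
Qed.

Section Sums.
Variables (F : finFieldType) (n : nat) (Hn : (0 < n)%N).

Lemma sum_mono_r (f : {ffun 'I_n -> F}) (m : int) (c : F) :
  \sum_j f j * mono n m c j = f (posO Hn m) * c.
Proof.
rewrite (bigD1 (posO Hn m)) //= ffunE eqxx big1 ?addr0 // => j Hj.
rewrite ffunE; case: eqP => [E|]; last by rewrite mulr0.
by exfalso; move/eqP: Hj; apply; apply: val_inj.
Qed.

Lemma sum_mono_l (f : {ffun 'I_n -> F}) (m : int) (c : F) :
  \sum_j mono n m c j * f j = c * f (posO Hn m).
Proof. by rewrite mulrC -sum_mono_r; apply: eq_bigr => j _; rewrite mulrC. Qed.

Lemma sumD_r (f g h : {ffun 'I_n -> F}) :
  \sum_j f j * (g + h) j = \sum_j f j * g j + \sum_j f j * h j.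
Proof. by rewrite -big_split; apply: eq_bigr => j _; rewrite ffunE mulrDr. Qed.

Lemma sumD_l (f g h : {ffun 'I_n -> F}) :
  \sum_j (g + h) j * f j = \sum_j g j * f j + \sum_j h j * f j.
Proof. by rewrite -big_split; apply: eq_bigr => j _; rewrite ffunE mulrDl. Qed.

Lemma sum_sum_r (f : {ffun 'I_n -> F}) (r : seq nat) (G : nat -> {ffun 'I_n -> F}) :
  \sum_j f j * (\sum_(i <- r) G i) j = \sum_(i <- r) \sum_j f j * G i j.
Proof.
rewrite exchange_big; apply: eq_bigr => j _; by rewrite sum_ffunE mulr_sumr.
Qed.

Lemma mono_val (m : int) (c : F) (j : 'I_n) :
  mono n m c j = if (j : nat) == idx n m then c else 0.
Proof. by rewrite ffunE. Qed.

End Sums.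
Arguments sum_mono_r {F n} Hn f m c.
Arguments sum_mono_l {F n} Hn f m c.
Arguments sumD_r {F n} f g h.
Arguments sumD_l {F n} f g h.
Arguments sum_sum_r {F n} f r G.
Arguments mono_val {F n} m c j.

Lemma sum_Hs (F : finFieldType) (q n : nat) (Hn : (0 < n)%N) (s : int) (gamma a b : F)
  (c : nat -> F) (f : {ffun 'I_n -> F}) :
  \sum_j f j * Hs_elem q n s gamma a b c j =
  f (posO Hn (s * ((n + 1)./2)%:Z)) * b
  + f (posO Hn (s * ((n - 1)./2)%:Z)) * (a * gamma)
  + f (posO Hn (s * ((n + 3)./2)%:Z)) * frob q n (s * (n + 2)%:Z) (a * gamma)
  + \sum_(1 <= i < ((n - 3)./2).+1)
      (f (posO Hn (s * i%:Z)) * c i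
       + f (posO Hn (s * (n%:Z - i%:Z + 1)))
           * frob q n (s * (2 * n%:Z - 2 * i%:Z + 1)) (c i)).
Proof.
rewrite /Hs_elem !sumD_r !(sum_mono_r Hn) sum_sum_r; congr (_ + _).
by apply: eq_bigr => i _; rewrite sumD_r !(sum_mono_r Hn).
Qed.

Lemma odd_mul (a b : int) : (a %% 2 = 1)%Z -> (b %% 2 = 1)%Z -> ((a * b) %% 2 = 1)%Z.
Proof.
move=> Ha Hb.
have [u Hu] : exists u : int, a = 2 * u + 1 by exists (a %/ 2)%Z; lia.
have [v Hv] : exists v : int, b = 2 * v + 1 by exists (b %/ 2)%Z; lia.
subst a b; lia.
Qed.

Lemma idx_eqb (n : nat) (s a b : int) : (0 < n)%N -> coprimez s n%:Z ->
  (1 <= a <= n%:Z)%R -> (1 <= b <= n%:Z)%R ->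
  (idx n (s * a) == idx n (s * b)) = (a == b).
Proof.
move=> Hn Hs Ha Hb; apply/eqP/eqP => [|->//]; exact: idx_inj.
Qed.

Lemma idx_shift (n : nat) (s b l : int) : idx n (s * (b + l * n%:Z)) = idx n (s * b).
Proof. by apply: idx_cong; rewrite mulrDr addrC mulrA modzMDl. Qed.

Section Main.
Variables (F : finFieldType) (q n m : nat) (s : int) (gamma alpha y0 : F).
Hypothesis Hnm : n = (2 * m).+1.
Hypothesis Hm : (1 <= m)%N.
Hypothesis Hq : (1 < q)%N.
Hypothesis Hcardx : forall x : F, x ^+ (q ^ (2 * n)) = x.
Hypothesis Hadd : forall x y : F, (x + y) ^+ q = x ^+ q + y ^+ q.
Hypothesis H2 : (2%:R : F) != 0.
Hypothesis Hs : coprimez s n%:Z.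
Hypothesis Hsodd : (s %% 2 = 1)%Z.
Hypothesis Hg : gamma != 0.
Hypothesis Hal : alpha != 0.
Hypothesis Haq : alpha ^+ (q ^ n) = - alpha.
Hypothesis Hy0 : TQ q n y0 != 0.

Lemma Hn0 : (0 < n)%N. Proof. by rewrite Hnm. Qed.
Lemma Hq0 : (0 < q)%N. Proof. lia. Qed.
Lemma Hodd : odd n. Proof. rewrite Hnm; lia. Qed.

Lemma halfs : ((n + 1)./2 = m.+1)%N /\ ((n - 1)./2 = m)%N /\ ((n + 3)./2 = m.+2)%N
  /\ (((n - 3)./2).+1 = m)%N.
Proof. rewrite Hnm; lia. Qed.

Lemma pw_qn2 (x : F) : (x ^+ (q ^ n)) ^+ (q ^ n) = x.
Proof. by rewrite -exprM -expnD addnn -mul2n Hcardx. Qed.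

Lemma cancel2 (x : F) : x *+ 2 = 0 -> x = 0.
Proof. by rewrite -mulr_natr => /eqP; rewrite mulf_eq0 (negbTE H2) orbF => /eqP. Qed.

Lemma TQ_anti (w : F) : w ^+ (q ^ n) = - w -> TQ q n w = 0.
Proof.
move=> H; have := @TQ_qn F q n Hn0 Hq0 Hcardx Hadd w Hodd.
rewrite H (@TQN F q n Hq0 Hadd) => E; apply: cancel2.
by rewrite mulr2n -{1}E addNr.
Qed.

Definition v0 := y0 + y0 ^+ (q ^ n).

Lemma v0_fix : v0 ^+ (q ^ n) = v0.
Proof. by rewrite /v0 (@pwD F q Hadd) pw_qn2 addrC. Qed.

Lemma trq2_v0 : trq2 q n v0 = TQ q n y0.
Proof.
have := @TQ_Fqn F q n Hn0 Hq0 Hcardx Hadd v0 Hodd v0_fix.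
rewrite /v0 (@TQD F q n Hadd) (@TQ_qn F q n Hn0 Hq0 Hcardx Hadd y0 Hodd) -/v0 => E.
apply/eqP; rewrite -subr_eq0; apply/eqP; apply: cancel2.
by rewrite mulrnBl -E mulr2n subrr.
Qed.

Lemma e_odd (i : int) : ((s * (2 * n%:Z - 2 * i + 1)) %% 2 = 1)%Z.
Proof. by apply: odd_mul => //; lia. Qed.

Lemma e2_odd : ((s * (n + 2)%:Z) %% 2 = 1)%Z.
Proof. by apply: odd_mul => //; rewrite Hnm; lia. Qed.

Lemma frob_sn (x : F) : frob q n (s * n%:Z) x = x ^+ (q ^ n).
Proof.
apply: (@frobE F q n Hn0 Hcardx).
have [u Hu] : exists u : int, s = 2 * u + 1 by exists (s %/ 2)%Z; lia.
rewrite (_ : s * n%:Z = u * (2 * n)%:Z + n%:Z) ?modzMDl //.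
subst s; lia.
Qed.

Lemma trq2_odd (e : int) (w : F) : (e %% 2 = 1)%Z ->
  trq2 q n (w + frob q n e w) = TQ q n w.
Proof. exact: (@trq2_frob_odd F q n Hn0 Hq0 Hcardx Hadd). Qed.

Lemma fz (e : int) : frob q n e (0 : F) = 0.
Proof. exact: frob_zero Hq0. Qed.

Lemma pwz : (0 : F) ^+ (q ^ n) = 0.
Proof. exact: pw0 Hq0 n. Qed.

Lemma surj (j : 'I_n) : exists t, (1 <= t <= n)%N /\ j = posO Hn0 (s * t%:Z).
Proof.
pose phi := fun i : 'I_n => posO Hn0 (s * (i.+1)%:Z).
have Hinj : injective phi.
  move=> i1 i2 /(congr1 val) /= E; apply: val_inj.
  have H1 := ltn_ord i1; have H2i := ltn_ord i2.
  have := @idx_inj n s (i1.+1)%:Z (i2.+1)%:Z Hn0 Hs ltac:(lia) ltac:(lia) E.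
  by case.
have [g Hg1 Hg2] := injF_bij Hinj.
exists (g j).+1; split; first by have := ltn_ord (g j); lia.
by rewrite -{1}(Hg2 j).
Qed.

Lemma dual_val (c : F) t : (1 <= t <= n)%N ->
  dual_elem q n s gamma alpha c (posO Hn0 (s * t%:Z)) =
  (if t == m then c * gamma^-1 * alpha else 0)
  + (if t == m.+2 then frob q n (s * (n + 2)%:Z) (c * gamma^-1 * alpha) else 0).
Proof.
move=> Ht; rewrite /dual_elem !ffunE /=; case: halfs => _ [H2' [H3 _]].
by rewrite H2' H3 !idx_eqb //; try lia.
Qed.

Section Fwd.
Variable f : {ffun 'I_n -> F}.
Hypothesis Hherm : hermitian_s q s f.
Hypothesis Horth : forall g, in_Hs q s gamma g -> pairing q f g = 0.

Lemma Zc t : (1 <= t)%N -> (t <= m - 1)%N -> f (posO Hn0 (s * t%:Z)) = 0.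
Proof.
move=> Ht1 Ht2.
set u := f (posO Hn0 (s * t%:Z)).
have Ht : (t < n)%N by lia.
have Hh := Hherm (Ordinal Ht) (posO Hn0 (s * (n%:Z - t%:Z + 1))) (posO Hn0 (s * t%:Z))
  erefl erefl.
rewrite /= -/u in Hh.
have key : forall x, TQ q n (u * x) = 0.
  move=> x; pose c := fun i : nat => if i == t then x else 0.
  have Hgin : in_Hs q s gamma (Hs_elem q n s gamma 0 0 c).
    by exists 0, 0, c; rewrite pwz.
  have := Horth _ Hgin; rewrite /pairing (@sum_Hs F q n Hn0).
  have Hmem : t \in index_iota 1 ((n - 3)./2).+1.
    by rewrite mem_index_iota; case: halfs => _ [_ [_ ->]]; lia.
  rewrite (bigD1_seq t Hmem (iota_uniq _ _)) /=.
  rewrite big1_seq => [|i /andP [Hi _]]; last first.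
    by rewrite /c (negbTE Hi) fz !mulr0 addr0.
  rewrite /c eqxx Hh -frobM !mul0r fz !mulr0 !add0r addr0.
  by rewrite trq2_odd // e_odd.
apply/eqP; apply: contraT => Hu.
have := key (u^-1 * y0); rewrite mulrA mulfV // mul1r => E.
by move: Hy0; rewrite E eqxx.
Qed.

Lemma Zp t : (m.+3 <= t)%N -> (t <= n)%N -> f (posO Hn0 (s * t%:Z)) = 0.
Proof.
move=> Ht1 Ht2.
have Hi : ((n - t).+1 < n)%N by lia.
have Hj : (posO Hn0 (s * t%:Z) : nat) = idx n (s * (n%:Z - (Ordinal Hi : nat)%:Z + 1)).
  rewrite /=; congr (idx n (s * _)); lia.
have := Hherm (Ordinal Hi) _ (posO Hn0 (s * (n - t).+1%:Z)) Hj erefl.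
rewrite /= => ->.
by rewrite Zc ?fz //; lia.
Qed.

Lemma Z0 : f (posO Hn0 (s * m.+1%:Z)) = 0.
Proof.
set u := f (posO Hn0 (s * m.+1%:Z)).
have Ht : (m.+1 < n)%N by lia.
have Hj : (posO Hn0 (s * m.+1%:Z) : nat) = idx n (s * (n%:Z - (Ordinal Ht : nat)%:Z + 1)).
  rewrite /=; congr (idx n (s * _)); lia.
have := Hherm (Ordinal Ht) _ (posO Hn0 (s * m.+1%:Z)) Hj erefl.
rewrite /= -/u.
have -> : s * (2 * n%:Z - 2 * m.+1%:Z + 1) = s * n%:Z.
  congr (_ * _); lia.
rewrite frob_sn => Hu.
apply/eqP; apply: contraT => Hu0.
pose b := u^-1 * v0.
have Hb : b ^+ (q ^ n) = b by rewrite /b exprMn exprVn -Hu v0_fix.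
have Hgin : in_Hs q s gamma (Hs_elem q n s gamma 0 b (fun _ => 0)).
  by exists 0, b, (fun _ => 0); rewrite pwz.
have := Horth _ Hgin; rewrite /pairing (@sum_Hs F q n Hn0).
case: halfs => -> _.
rewrite big1 => [|i _]; last by rewrite fz !mulr0 addr0.
rewrite !mul0r fz !mulr0 !addr0 -/u /b mulrA mulfV // mul1r trq2_v0 => E.
by move: Hy0; rewrite E eqxx.
Qed.

Lemma K2 : f (posO Hn0 (s * m.+2%:Z)) = frob q n (s * (n + 2)%:Z) (f (posO Hn0 (s * m%:Z))).
Proof.
have Ht : (m < n)%N by lia.
have Hj : (posO Hn0 (s * m.+2%:Z) : nat) = idx n (s * (n%:Z - (Ordinal Ht : nat)%:Z + 1)).
  rewrite /=; congr (idx n (s * _)); lia.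
have := Hherm (Ordinal Ht) _ (posO Hn0 (s * m%:Z)) Hj erefl.
rewrite /= => ->; congr (frob q n _ _); congr (_ * _); lia.
Qed.

Lemma TQv0 : TQ q n v0 != 0.
Proof.
rewrite (@TQ_Fqn F q n Hn0 Hq0 Hcardx Hadd v0 Hodd v0_fix) trq2_v0.
by apply/eqP => /cancel2 E; move: Hy0; rewrite E eqxx.
Qed.

Lemma Vz : f (posO Hn0 (s * m%:Z)) * gamma + (f (posO Hn0 (s * m%:Z)) * gamma) ^+ (q ^ n) = 0.
Proof.
set d := f (posO Hn0 (s * m%:Z)); set z := d * gamma.
have key : forall a, a ^+ (q ^ n) = a -> TQ q n (z * a) = 0.
  move=> a Ha.
  have Hgin : in_Hs q s gamma (Hs_elem q n s gamma a 0 (fun _ => 0)).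
    by exists a, 0, (fun _ => 0); rewrite pwz.
  have := Horth _ Hgin; rewrite /pairing (@sum_Hs F q n Hn0).
  case: halfs => H1 [H2' [H3 _]]; rewrite H1 H2' H3.
  rewrite big1 => [|i _]; last by rewrite fz !mulr0 addr0.
  rewrite K2 -frobM !mulr0 add0r addr0 -/d trq2_odd ?e2_odd //.
  by rewrite /z -mulrA [gamma * a]mulrC.
apply/eqP; apply: contraT => Hv.
set v := z + z ^+ (q ^ n).
have Hvf : v ^+ (q ^ n) = v by rewrite /v (@pwD F q Hadd) pw_qn2 addrC.
pose a := v^-1 * v0.
have Ha : a ^+ (q ^ n) = a by rewrite /a exprMn exprVn Hvf v0_fix.
have E1 := key a Ha.
have E2 : TQ q n (z ^+ (q ^ n) * a) = 0.
  rewrite -Ha -exprMn (@TQ_qn F q n Hn0 Hq0 Hcardx Hadd _ Hodd); exact: E1.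
have : TQ q n (v * a) = 0 by rewrite /v mulrDl (@TQD F q n Hadd) E1 E2 addr0.
rewrite /a mulrA mulfV // mul1r => E.
by move: TQv0; rewrite E eqxx.
Qed.

Lemma fwd : exists c, c ^+ (q ^ n) = c /\ f = dual_elem q n s gamma alpha c.
Proof.
set d := f (posO Hn0 (s * m%:Z)).
have Hz : (d * gamma) ^+ (q ^ n) = - (d * gamma).
  by apply/eqP; rewrite -addr_eq0 addrC; apply/eqP; exact: Vz.
exists (d * gamma / alpha); split.
  by rewrite exprMn exprVn Hz Haq invrN mulrN mulNr opprK.
have Hd : d * gamma / alpha * gamma^-1 * alpha = d.
  by field; rewrite Hg Hal.
apply/ffunP => j; have [t [Ht ->]] := surj j.
rewrite dual_val // Hd.
have : (t <= m - 1 \/ t = m \/ t = m.+1 \/ t = m.+2 \/ m.+3 <= t)%N by lia.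
case=> [H|[H|[H|[H|H]]]].
- rewrite Zc; try lia.
  rewrite ifF; last by apply/eqP; lia.
  by rewrite ifF ?addr0 //; apply/eqP; lia.
- subst t; rewrite eqxx ifF ?addr0 //; apply/eqP; lia.
- subst t; rewrite Z0 ifF; last by apply/eqP; lia.
  by rewrite ifF ?addr0 //; apply/eqP; lia.
- subst t; rewrite K2 ifF ?add0r ?eqxx //; apply/eqP; lia.
- rewrite Zp; try lia.
  rewrite ifF; last by apply/eqP; lia.
  by rewrite ifF ?addr0 //; apply/eqP; lia.
Qed.

End Fwd.
Section Bwd.
Variable c : F.
Hypothesis Hc : c ^+ (q ^ n) = c.

Lemma Hs_at (a b : F) (cc : nat -> F) t : t = m \/ t = m.+2 ->
  Hs_elem q n s gamma a b cc (posO Hn0 (s * t%:Z)) =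
  if t == m then a * gamma else frob q n (s * (n + 2)%:Z) (a * gamma).
Proof.
move=> Ht.
have Ht' : (1 <= t <= n)%N by lia.
rewrite /Hs_elem !ffunE sum_ffunE /=.
case: halfs => H1 [H2' [H3 H4]]; rewrite H1 H2' H3 H4.
rewrite big1_seq => [|i /andP [_ Hi]]; last first.
  rewrite mem_index_iota in Hi.
  rewrite !ffunE /= !idx_eqb //; try lia.
  rewrite ifF; last by apply/eqP; lia.
  by rewrite ifF ?addr0 //; apply/eqP; lia.
rewrite !idx_eqb //; try lia.
case: Ht => ->; repeat (case: eqP => ? ; try (exfalso; lia)); by rewrite ?add0r ?addr0.
Qed.

Lemma orth_dual g : in_Hs q s gamma g -> pairing q (dual_elem q n s gamma alpha c) g = 0.
Proof.
move=> [a [b [cc [Ha [Hb ->]]]]].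
rewrite /pairing {1}/dual_elem sumD_l !(sum_mono_l Hn0).
case: halfs => _ [H2' [H3 _]]; rewrite H2' H3.
rewrite !Hs_at; [|by right|by left].
rewrite eqxx ifF; last by apply/eqP; lia.
rewrite -frobM trq2_odd ?e2_odd //.
apply: TQ_anti.
rewrite !exprMn Hc Ha Haq exprVn.
have Hg' : gamma ^+ (q ^ n) != 0 by rewrite expf_neq0.
by field; rewrite Hg Hg'.
Qed.

Lemma herm_dual : hermitian_s q s (dual_elem q n s gamma alpha c).
Proof.
move=> i j k Hj Hk.
set d := c * gamma^-1 * alpha.
have Hi := ltn_ord i.
case: (posnP i) => Hi0.
{ have Ej : j = posO Hn0 (s * 1%:Z).
    apply: val_inj; rewrite /= Hj Hi0 -(idx_shift n s 1 1); congr (idx n (s * _)); lia.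
  have Ek : k = posO Hn0 (s * n%:Z).
    apply: val_inj; rewrite /= Hk Hi0 -(idx_shift n s 0 1); congr (idx n (s * _)); lia.
  rewrite Ej Ek Hi0 !dual_val; try lia.
  repeat (case: eqP => ? ; try (exfalso; lia)).
  all: rewrite ?add0r ?addr0 ?fz //.
  all: first [ (congr (frob q n _ _); lia)
             | (rewrite (@frob_comp F q n Hn0 Hcardx) (@frob0 F q n Hn0 Hcardx) //;
                rewrite -mulrDr; apply/dvdz_mod0P; apply: dvdz_mull; apply/dvdzP;
                first [ (exists 2; lia) | (exists 1; lia) ]) ].
}
{ have Ej : j = posO Hn0 (s * ((n - i).+1)%:Z).
    apply: val_inj; rewrite /= Hj; congr (idx n (s * _)); lia.
  have Ek : k = posO Hn0 (s * (i : nat)%:Z) by apply: val_inj; rewrite /= Hk.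
  rewrite Ej Ek !dual_val; try lia.
  repeat (case: eqP => ? ; try (exfalso; lia)).
  all: rewrite ?add0r ?addr0 ?fz //.
  all: first [ (congr (frob q n _ _); lia)
             | (rewrite (@frob_comp F q n Hn0 Hcardx) (@frob0 F q n Hn0 Hcardx) //;
                rewrite -mulrDr; apply/dvdz_mod0P; apply: dvdz_mull; apply/dvdzP;
                first [ (exists 2; lia) | (exists 1; lia) ]) ].
}
Qed.

End Bwd.
End Main.

Lemma frobp_add (F : finFieldType) (p : nat) (Hc : p \in [char F]) e (x y : F) :
  (x + y) ^+ (p ^ e) = x ^+ (p ^ e) + y ^+ (p ^ e).
Proof.
elim: e => [|e IH]; first by rewrite !expn0 !expr1.
rewrite expnSr !exprM IH.
have := Frobenius_autD_comm Hc (mulrC (x ^+ (p ^ e)) (y ^+ (p ^ e))).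
by rewrite !Frobenius_autE.
Qed.

Lemma alpha_pow (F : finFieldType) (q : nat) (alpha : F) :
  odd q -> alpha ^+ (q - 1) = -1 -> forall e, alpha ^+ (q ^ e) = (-1) ^+ e * alpha.
Proof.
move=> Hoq Ha; elim=> [|e IH]; first by rewrite expn0 expr1 expr0 mul1r.
have Hq1 : alpha ^+ q = - alpha.
  have E : q = (q - 1).+1 by lia.
  by rewrite {1}E exprS Ha mulrN1.
rewrite expnSr exprM IH exprMn Hq1 -exprM mulnC exprM -(signr_odd F q) Hoq expr1.
by rewrite exprS mulN1r mulrN mulNr.
Qed.

Theorem theorem6p3 (F : finFieldType) (q n : nat) (s : int) (gamma alpha : F) :
  (exists p k : nat, prime p /\ (0 < k)%N /\ q = (p ^ k)%N) ->
  odd q ->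
  #|F| = (q ^ (2 * n))%N ->
  odd n -> (3 <= n)%N ->
  coprimez s (2 * n)%:Z ->
  ~ (exists y : F, y ^+ q = y /\ y ^+ 2 = @norm_q2n_q F q n gamma) ->
  alpha ^+ (q - 1) = -1 ->
  forall f : {ffun 'I_n -> F},
    @in_dual_Hs F q n s gamma f <->
    exists c : F, c ^+ (q ^ n) = c /\ f = @dual_elem F q n s gamma alpha c.
Proof.
move=> [p [k [Hp [Hk Hqpk]]]] Hoq Hcard Hon Hn3 Hcop Hnsq Halpha f.
have Hp2 := prime_gt1 Hp.
have Hq : (1 < q)%N.
  have : (p <= p ^ k)%N by rewrite -{1}(expn1 p) leq_pexp2l //; lia.
  lia.
have Hchar : p \in [char F].
  apply: (@card_finPcharP F p (k * (2 * n))) => //.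
  by rewrite Hcard Hqpk -expnM.
have Hadd : forall x y : F, (x + y) ^+ q = x ^+ q + y ^+ q.
  by move=> x y; rewrite Hqpk frobp_add.
have Hcardx : forall x : F, x ^+ (q ^ (2 * n)) = x by move=> x; rewrite -Hcard expf_card.
have H2 : (2%:R : F) != 0.
  apply/negP => /eqP H.
  have := dvdn_pcharf Hchar 2; rewrite H eqxx => Hd.
  have Hp2' : p = 2%N by have := dvdn_leq (isT : (0 < 2)%N) Hd; lia.
  by move: Hoq; rewrite Hqpk Hp2'; case: (k) Hk => // k' _; rewrite expnS; lia.
have Hnm : n = (2 * n./2).+1 by lia.
have Hm : (1 <= n./2)%N by lia.
move: Hcop; rewrite PoszM coprimezMr => /andP [Hs2 Hs].
have Hsodd : (s %% 2 = 1)%Z.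
  case/coprimezP: Hs2 => [[u v]] /= E.
  have : (s %% 2 = 0 \/ s %% 2 = 1)%Z by lia.
  case=> // H0.
  have Es : s = 2 * (s %/ 2)%Z by lia.
  have : u * s = 2 * (u * (s %/ 2)%Z) by rewrite {1}Es; ring.
  lia.
have Hn0 : (0 < n)%N by lia.
have Hg : gamma != 0.
  apply/eqP => g0; apply: Hnsq; exists 0; rewrite g0 /norm_q2n_q !expr0n /=.
  have -> : (q == 0)%N = false by apply/eqP; lia.
  have -> : ((q ^ (2 * n) - 1) %/ (q - 1) == 0)%N = false.
    apply/negbTE; rewrite -lt0n divn_gt0; last by lia.
    have : (q ^ 1 <= q ^ (2 * n))%N by rewrite leq_pexp2l //; lia.
    rewrite expn1; lia.
  by [].
have Hal : alpha != 0.
  apply/eqP => a0; move: Halpha; rewrite a0 expr0n.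
  have -> : (q - 1 == 0)%N = false by apply/eqP; lia.
  by move/eqP; rewrite eq_sym oppr_eq0 oner_eq0.
have Haq : alpha ^+ (q ^ n) = - alpha.
  by rewrite (alpha_pow _ _ _ Hoq Halpha) -signr_odd Hon expr1 mulN1r.
have [y0 Hy0] := @TQ_nonzero F q n Hn0 Hq Hcard Hadd.
split.
- case=> Hh Ho.
  by apply: (@fwd F q n n./2 s gamma alpha y0).
- case=> c [Hc ->]; split.
  + by apply: (@herm_dual F q n n./2 s gamma alpha y0).
  + move=> g Hgin.
    by apply: (@orth_dual F q n n./2 s gamma alpha y0).
Qed.
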